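(* Let $a\in\mathbb{R}$ and, for $\theta\in(2\pi/3,\pi)$ with $1-4a\cos^2\theta\neq0$, define \[ \zeta(\theta)=\frac{(2a-1)\cos\theta+\sqrt{(1-4a)\cos^2\theta+a}}{1-4a\cos^2\theta}. \] Then $|\zeta(\theta)|>1$ for every $a\in(-1,1/3)$ and every $\theta\in(2\pi/3,\pi)$ with $1-4a\cos^2\theta\neq0$.
   Context: For $a\in(-1,1/3)$ and $\theta\in(2\pi/3,\pi)$ the radicand $(1-4a)\cos^2\theta+a$ is positive, so $\zeta(\theta)$ is real. *)

(* Defs.v *)
From Stdlib Require Import Reals.
Open Scope R_scope.

Definition zeta (a theta : R) : R :=
  ((2 * a - 1) * cos theta + sqrt ((1 - 4 * a) * (cos theta)^2 + a))
  / (1 - 4 * a * (cos theta)^2).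

(* Main.v *)
Require Import Defs.
From Stdlib Require Import Reals Lra Psatz.
Open Scope R_scope.

Theorem lemma2p5 (a theta : R) :
  -1 < a < 1/3 ->
  2 * PI / 3 < theta < PI ->
  1 - 4 * a * (cos theta)^2 <> 0 ->
  Rabs (zeta a theta) > 1.
Proof.
  intros [Ha1 Ha2] [Ht1 Ht2] HD.
  assert (HPI := PI_RGT_0).
  assert (Hc1 : cos theta < -1/2).
  { rewrite <- cos_2PI3. apply cos_decreasing_1; lra. }
  assert (Hc2 : -1 < cos theta).
  { rewrite <- cos_PI. apply cos_decreasing_1; lra. }
  unfold zeta. set (c := cos theta) in *.
  set (D := 1 - 4 * a * c^2) in *.
  assert (Hr : 0 <= (1 - 4 * a) * c^2 + a).
  { assert (0 < 4*c^2-1) by nra. assert (0 < 1 - c^2) by nra.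
    assert (0 <= (1/3 - a)*(4*c^2-1)) by (apply Rmult_le_pos; lra). nra. }
  set (s := sqrt ((1 - 4 * a) * c^2 + a)).
  assert (Hs0 : 0 <= s) by apply sqrt_pos.
  assert (Hs2 : s * s = (1 - 4 * a) * c^2 + a) by (apply sqrt_sqrt; lra).
  set (k := (2 * a - 1) * c).
  assert (Hk : 0 < k) by (unfold k; nra).
  assert (Hg : 0 < (2*c+1) * (a*(2*c+1) - 1)).
  { assert (a*(2*c+1) - 1 < 0) by nra. nra. }
  assert (Hh : (2*c-1) * (a*(2*c-1)+1) < 0).
  { assert (a*(2*c-1)+1 > 0) by nra. nra. }
  unfold Rdiv; rewrite Rabs_mult, Rabs_inv.
  rewrite (Rabs_right (k + s)) by lra.
  assert (HaD : 0 < Rabs D) by (apply Rabs_pos_lt; exact HD).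
  apply Rlt_gt. apply (Rmult_lt_reg_r (Rabs D)); [exact HaD|].
  rewrite Rmult_1_l, Rmult_assoc, Rinv_l by lra. rewrite Rmult_1_r.
  destruct (Rlt_or_le 0 D) as [Dp|Dn].
  - rewrite Rabs_right by lra.
    assert (E : s*s - (D-k)*(D-k) = D * ((2*c+1) * (a*(2*c+1) - 1))).
    { rewrite Hs2. unfold D, k. ring. }
    destruct (Rlt_or_le (D-k) 0). lra.
    assert (0 < D * ((2*c+1) * (a*(2*c+1) - 1))) by (apply Rmult_lt_0_compat; lra).
    nra.
  - assert (Dn' : D < 0) by lra.
    rewrite Rabs_left by lra.
    assert (E : s*s - (D+k)*(D+k) = D * ((2*c-1) * (a*(2*c-1)+1))).
    { rewrite Hs2. unfold D, k. ring. }
    destruct (Rlt_or_le (-D-k) 0). lra.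
    assert (0 < D * ((2*c-1) * (a*(2*c-1)+1))) by nra.
    nra.
Qed.
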